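(* Let $G$ be a finite bipartite graph. Then there exist $n,k\in\mathbb{N}$ with $k\le n$ such that for every 2-coloring of the edges of $B_{n,k}$, there exists an induced monochromatic copy of $G$ in $B_{n,k}$; that is, there is a set $V'$ of vertices of $B_{n,k}$ such that the induced subgraph of $B_{n,k}$ on $V'$ is isomorphic to $G$ and all of its edges receive the same color.
   Context: For $n\in\mathbb{N}$, $[n]=\{1,\dots,n\}$, and for a set $X$, $\binom{X}{k}$ denotes the set of $k$-element subsets of $X$. For $k\le n$, $B_{n,k}$ is the bipartite graph with left vertex set $[n]$, right vertex set $\binom{[n]}{k}$, and edge set $\{(x,X)\in[n]\times\binom{[n]}{k} : x\in X\}$. A bipartite graph is a graph whose vertex set is partitioned into sets $A,B$ with all edges between $A$ and $B$. For a graph $H=(V,E)$ and $V'\subseteq V$, the induced subgraph on $V'$ has vertex set $V'$ and edge set consisting of all edges of $H$ with both endpoints in $V'$. A 2-coloring of the edges is a map from the edge set to a 2-element set of colors. *)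

(* Defs.v *)
From mathcomp Require Import all_boot.
Set Implicit Arguments. Unset Strict Implicit. Unset Printing Implicit Defensive.

Definition simple_graph (V : finType) (e : rel V) : Prop :=
  symmetric e /\ irreflexive e.

Definition bipartite (V : finType) (e : rel V) : Prop :=
  exists side : V -> bool, forall u v, e u v -> side u != side v.

(* The k-element subsets of [n] (we use 'I_n = {0,...,n-1} for [n]). *)
Definition kset (n k : nat) := {X : {set 'I_n} | #|X| == k}.

Definition Bvert (n k : nat) := ('I_n + kset n k)%type.

Definition Badj (n k : nat) (a b : Bvert n k) : bool :=
  match a, b with
  | inl x, inr X => x \in val X
  | inr X, inl x => x \in val X
  | _, _ => false
  end.

Definition Bedge (n k : nat) := {p : 'I_n * kset n k | p.1 \in val p.2}.

(* Main.v *)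
Require Import Defs.
From mathcomp Require Import all_boot.
From mathcomp Require Import zify.
Set Implicit Arguments. Unset Strict Implicit.

Definition cfun n k (c : Bedge n k -> bool) (x : 'I_n) (X : {set 'I_n}) : bool :=
  if @insub _ (fun X : {set 'I_n} => #|X| == k) (kset n k) X is Some KX then
    (if @insub _ (fun p : 'I_n * kset n k => p.1 \in val p.2) (Bedge n k) (x, KX) is Some p then c p else false)
  else false.

Lemma cfunE n k c (p : Bedge n k) : cfun c (val p).1 (val (val p).2) = c p.
Proof.
case: p => [[x KX] H] /=; rewrite /cfun valK.
by rewrite (valK (exist (fun p : 'I_n * kset n k => p.1 \in val p.2) (x, KX) H)).
Qed.
Lemma extend_hom (T : finType) (A B : {set T}) x k (P : {set T} -> bool) :
  x \in A -> B \subset A :\ x ->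
  (forall X : {set T}, X \subset B -> #|X| = k.+1 -> P X) ->
  (forall Y : {set T}, Y \subset B -> #|Y| = k -> P (x |: Y)) ->
  [/\ x |: B \subset A, #|x |: B| = #|B|.+1 &
   forall X : {set T}, X \subset x |: B -> #|X| = k.+1 -> P X].
Proof.
move=> xA sB H1 H2.
have xB : x \notin B.
  by apply/negP => /(subsetP sB); rewrite !inE eqxx.
split.
- apply/subsetP => y; rewrite !inE => /orP[/eqP->//|/(subsetP sB)].
  by rewrite !inE => /andP[].
- by rewrite cardsU1 xB.
- move=> X sX cX.
  case xX: (x \in X).
  + rewrite -(setD1K xX); apply: H2.
    * apply/subsetP => y; rewrite !inE => /andP[yx yX].
      by move: (subsetP sX y yX); rewrite !inE (negbTE yx).
    * by move: cX; rewrite (cardsD1 x X) xX => -[].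
  + apply: H1 cX; apply/subsetP => y yX.
    move: (subsetP sX y yX); rewrite !inE => /orP[/eqP E|//].
    by rewrite E xX in yX.
Qed.

Lemma ramsey2 k : forall s t, exists N, forall (T : finType) (A : {set T})
  (c : {set T} -> bool), N <= #|A| -> exists2 B : {set T}, B \subset A &
  ((s <= #|B| /\ forall X : {set T}, X \subset B -> #|X| = k -> c X) \/
   (t <= #|B| /\ forall X : {set T}, X \subset B -> #|X| = k -> ~~ c X)).
Proof.
elim: k => [|k IHk] s t.
  exists (maxn s t) => T A c HA; exists A => //.
  case cs: (c set0); [left|right]; (split; first lia);
    by move=> X _ /cards0_eq ->; rewrite cs.
elim: s t => [|s IHs] t.
  exists 0 => T A c _; exists set0; first exact: sub0set.
  left; split => // X /subset_leq_card; rewrite cards0 => h cX; lia.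
elim: t => [|t IHt].
  exists 0 => T A c _; exists set0; first exact: sub0set.
  right; split => // X /subset_leq_card; rewrite cards0 => h cX; lia.
have [N1 HN1] := IHs t.+1.
have [N2 HN2] := IHt.
have [N3 HN3] := IHk N1 N2.
exists N3.+1 => T A c HA.
have [x xA] : exists x, x \in A by apply/card_gt0P; lia.
have HA' : N3 <= #|A :\ x| by move: HA; rewrite (cardsD1 x A) xA; lia.
have [B' sB' [[cB' hB']|[cB' hB']]] := HN3 T (A :\ x) (fun Y => c (x |: Y)) HA'.
- have [B'' sB'' [[cB'' hB'']|[cB'' hB'']]] := HN1 T B' c cB'.
  + have sB2 : B'' \subset A :\ x by exact: subset_trans sB''  sB'.
    have [s1 s2 s3] := extend_hom xA sB2 hB''
       (fun Y sY cY => hB' Y (subset_trans sY sB'') cY).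
    exists (x |: B'') => //; left; split => //; rewrite s2; lia.
  + exists B''; last by right.
    apply: subset_trans sB'' (subset_trans sB' _); exact: subsetDl.
- have [B'' sB'' [[cB'' hB'']|[cB'' hB'']]] := HN2 T B' c cB'.
  + exists B''; last by left.
    apply: subset_trans sB'' (subset_trans sB' _); exact: subsetDl.
  + have sB2 : B'' \subset A :\ x by exact: subset_trans sB''  sB'.
    have [s1 s2 s3] := extend_hom (P := fun X => ~~ c X) xA sB2 hB''
       (fun Y sY cY => hB' Y (subset_trans sY sB'') cY).
    exists (x |: B'') => //; right; split => //; rewrite s2; lia.
Qed.

Lemma ramsey_bits k j m : exists N, forall (T : finType) (A : {set T})
  (cs : nat -> {set T} -> bool), N <= #|A| -> exists2 B : {set T}, B \subset A &
  m <= #|B| /\ forall i, i < j -> exists col, forall X : {set T}, X \subset B -> #|X| = k -> cs i X = col.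
Proof.
elim: j => [|j [N' HN']].
  by exists m => T A cs HA; exists A => //; split => // i.
have [N HN] := ramsey2 k N' N'.
exists N => T A cs HA.
have [B1 sB1 HB1] := HN T A (cs j) HA.
have [cB1 hB1] : N' <= #|B1| /\ exists col, forall X : {set T}, X \subset B1 -> #|X| = k -> cs j X = col.
  case: HB1 => -[c1 h1]; split => //; [exists true|exists false] => X sX cX.
    exact: h1.
  exact/negbTE/h1.
have [B sB [cB hB]] := HN' T B1 cs cB1.
exists B; first exact: subset_trans sB sB1.
split => // i; rewrite ltnS leq_eqVlt => /orP[/eqP->|ij]; last exact: hB.
have [col hc] := hB1; exists col => X sX; apply: hc; exact: subset_trans sX sB.
Qed.
Definition rk n (X : {set 'I_n}) (x : 'I_n) : nat := #|[set y in X | y < x]|.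

Lemma rk_sub n (X : {set 'I_n}) (x y : 'I_n) : x \in X -> x < y -> rk X x < rk X y.
Proof.
move=> xX xy; apply: proper_card; apply/properP; split.
  apply/subsetP => z; rewrite !inE => /andP[-> zx]; exact: ltn_trans zx xy.
by exists x; rewrite !inE ?xX ?xy ?ltnn.
Qed.

Lemma rk_inj n (X : {set 'I_n}) (x y : 'I_n) : x \in X -> y \in X -> rk X x = rk X y -> x = y.
Proof.
move=> xX yX E; case: (ltngtP x y) => [xy|yx|/val_inj //].
  by have := rk_sub xX xy; rewrite E ltnn.
by have := rk_sub yX yx; rewrite E ltnn.
Qed.

Lemma rk_lt n (X : {set 'I_n}) x : x \in X -> rk X x < #|X|.
Proof.
move=> xX; apply: proper_card; apply/properP; split.
  by apply/subsetP => z; rewrite !inE => /andP[].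
by exists x; rewrite ?inE ?xX ?ltnn ?andbF.
Qed.

Lemma card_lt_ord K (r : 'I_K) : #|[set i : 'I_K | i < r]| = r.
Proof.
have rK : r <= K by exact: ltnW.
have -> : [set i : 'I_K | i < r] = widen_ord rK @: [set: 'I_r].
  apply/setP => i; rewrite !inE; apply/idP/imsetP.
    by move=> ir; exists (Ordinal ir) => //; apply: val_inj.
  by case=> j _ ->; rewrite /= ltn_ord.
have wi : injective (widen_ord rK) by move=> a b /(congr1 val) /= /val_inj.
by rewrite (card_imset _ wi) cardsT card_ord.
Qed.

Lemma rk_img n K (F : 'I_K -> 'I_n) :
  (forall i j : 'I_K, i < j -> F i < F j) ->
  #|F @: [set: 'I_K]| = K /\ forall r, rk (F @: [set: 'I_K]) (F r) = r.
Proof.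
move=> mono.
have monoE : forall i j, (F i < F j) = (i < j).
  move=> i j; case: (ltngtP i j) => [ij|ji|/val_inj ->]; first exact: mono.
  - by apply/negbTE; rewrite -leqNgt ltnW // mono.
  - by rewrite ltnn.
have Finj : injective F.
  move=> i j E; apply/val_inj/eqP; rewrite eqn_leq.
  by rewrite leqNgt -monoE E ltnn leqNgt -monoE E ltnn.
split; first by rewrite card_imset // cardsT card_ord.
move=> r; rewrite /rk.
have -> : [set y in F @: [set: 'I_K] | y < F r] = F @: [set i : 'I_K | i < r].
  apply/setP => y; rewrite !inE; apply/andP/imsetP.
    by case=> /imsetP[i _ ->]; rewrite monoE => ir; exists i; rewrite ?inE.
  by case=> i; rewrite inE => ir ->; rewrite imset_f ?inE // monoE.
by rewrite card_imset // card_lt_ord.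
Qed.
Lemma enum_sorted n (B : {set 'I_n}) : sorted (fun x y : 'I_n => x < y) (enum B).
Proof.
rewrite /enum_mem -enumT.
have: sorted ltn (map val (enum 'I_n)) by rewrite val_enum_ord iota_ltn_sorted.
rewrite sorted_map => H.
apply: sorted_filter; last exact: H. move=> x y z; exact: ltn_trans.
Qed.
Lemma divl (W r1 r2 h1 h2 : nat) : h1 < W -> h2 < W -> W*r1 + h1 = W*r2 + h2 -> r1 = r2 /\ h1 = h2.
Proof.
move=> h1W h2W E.
have key: forall a b x y, x < W -> a < b -> W*a + x < W*b + y.
  move=> a b x y xW ab. have: W * a.+1 <= W * b by rewrite leq_mul2l ab orbT.
  rewrite mulnS; lia.
case: (ltngtP r1 r2) => H.
- by have := key _ _ h1 h2 h1W H; rewrite E ltnNge leqnn.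
- by have := key _ _ h2 h1 h2W H; rewrite E ltnNge leqnn.
- subst; split => //; lia.
Qed.

Theorem mainTheorem1 (V : finType) (e : rel V) :
  simple_graph e -> bipartite e ->
  exists n k : nat, k <= n /\
    forall c : Bedge n k -> bool,
      exists (V' : {set Bvert n k}) (f : V -> Bvert n k),
        [/\ injective f,
            forall v, f v \in V',
            forall w, w \in V' -> exists v, f v = w,
            forall u v, e u v = Badj (f u) (f v)
          & exists col : bool, forall p : Bedge n k,
              inl (val p).1 \in V' -> inr (val p).2 \in V' -> c p = col].
Proof.
move=> [esymm eirr] [side Hside].
pose N := #|V|. pose K := (2*N).+1. pose W := N.+2. pose m := W * K.
have [N0 HN0] := ramsey_bits K K m.
pose n0 := maxn K N0.
exists n0.+1, K; split; first by rewrite /n0; lia.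
move=> c.
pose bit (i : nat) (X : {set 'I_n0.+1}) := [exists x in X, (rk X x == i) && cfun c x X].
have HA : N0 <= #|[set: 'I_n0.+1]| by rewrite cardsT card_ord /n0; lia.
have [B _ [mB Hhom]] := HN0 _ [set: 'I_n0.+1] bit HA.
pose pat (i : nat) := [exists X : {set 'I_n0.+1}, [&& X \subset B, #|X| == K & bit i X]].
have Hpat : forall i, i < K -> forall X : {set 'I_n0.+1}, X \subset B -> #|X| = K -> bit i X = pat i.
  move=> i iK X sX cX; have [col hc] := Hhom i iK.
  rewrite /pat; case pi: [exists _, _].
  - move: pi => /existsP[Y /and3P[sY /eqP cY bY]].
    by rewrite hc // -(hc Y sY cY).
  - apply/negbTE/negP => bX.
    have : [exists X0 : {set 'I_n0.+1}, [&& X0 \subset B, #|X0| == K & bit i X0]].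
      by apply/existsP; exists X; rewrite sX cX eqxx bX.
    by rewrite pi.
have Hc : forall (X : {set 'I_n0.+1}) x, X \subset B -> #|X| = K -> x \in X -> cfun c x X = pat (rk X x).
  move=> X x sX cX xX; rewrite -(Hpat _ _ X sX cX); last by rewrite -cX rk_lt.
  apply/idP/existsP.
    by move=> cx; exists x; rewrite xX eqxx cx.
  by case=> y /and3P[yX /eqP ry cy]; rewrite -(rk_inj yX xX ry).
pose P b := [set r : 'I_(2*N) | pat r == b].
have [col Pc] : exists col, N <= #|P col|.
  have E : #|P true| + #|P false| = 2*N.
    have -> : P false = ~: P true.
      by apply/setP => r; rewrite !inE; case: (pat r).
    by rewrite cardsC card_ord.
  case: (leqP N #|P true|) => h; [exists true | exists false]; lia.
pose sig (v : V) : 'I_(2*N) := enum_val (widen_ord Pc (enum_rank v)).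
have sig_inj : injective sig.
  by move=> u v /enum_val_inj /(congr1 val) /= /val_inj /enum_rank_inj.
have sigP : forall v, pat (sig v) = col.
  by move=> v; have := enum_valP (widen_ord Pc (enum_rank v)); rewrite inE => /eqP.
pose h (u : V) (r : nat) : nat := if r == 2*N then (enum_rank u).+1
  else if [exists w, e u w && (sig w == r :> nat)] then 0 else 1.
have hW : forall u r, h u r < W.
  move=> u r; rewrite /h; case: ifP => _.
    by rewrite /W !ltnS; exact: ltnW (ltn_ord (enum_rank u)).
  by case: ifP => _; rewrite /W; lia.
pose g u (r : nat) := W * r + h u r.
pose s := enum B.
pose pos i := nth ord0 s i.
have ssz : m <= size s by rewrite /s -cardE.
have pos_mono : forall i j, i < j -> j < size s -> pos i < pos j.
  move=> i j ij js.
  apply: (sorted_ltn_nth (leT := fun x y : 'I_n0.+1 => x < y)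
    (fun y x z => @ltn_trans y x z) ord0 (enum_sorted B)) => //;
  rewrite inE //; exact: ltn_trans ij js.
have pos_inj : forall i j, i < size s -> j < size s -> pos i = pos j -> i = j.
  move=> i j hi hj E; case: (ltngtP i j) => // ij.
    by have := pos_mono _ _ ij hj; rewrite E ltnn.
  by have := pos_mono _ _ ij hi; rewrite E ltnn.
have posB : forall i, i < size s -> pos i \in B.
  by move=> i hi; rewrite -mem_enum; apply: mem_nth.
have g_lt : forall u r, r < K -> g u r < m.
  move=> u r rK; have := hW u r; have : W * r.+1 <= W * K by rewrite leq_mul2l rK orbT.
  rewrite mulnS /g /m; lia.
have g_mono : forall u r1 r2, r1 < r2 -> g u r1 < g u r2.
  move=> u r1 r2 r12; have := hW u r1; have : W * r1.+1 <= W * r2 by rewrite leq_mul2l r12 orbT.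
  rewrite mulnS /g; lia.
pose F u (r : 'I_K) := pos (g u r).
have F_mono : forall u (i j : 'I_K), i < j -> F u i < F u j.
  move=> u i j ij; apply: pos_mono; first exact: g_mono.
  exact: leq_trans (g_lt _ _ (ltn_ord j)) ssz.
pose X u := F u @: [set: 'I_K].
have XP u := rk_img (F_mono u).
have XB : forall u, X u \subset B.
  move=> u; apply/subsetP => y /imsetP[r _ ->]; apply: posB.
  exact: leq_trans (g_lt _ _ (ltn_ord r)) ssz.
have XKe : forall u, #|X u| == K by move=> u; rewrite (XP u).1.
pose Xk u : kset n0.+1 K := exist (fun X : {set 'I_n0.+1} => #|X| == K) (X u) (XKe u).
pose f v : Bvert n0.+1 K := if side v then inl (pos (W * sig v)) else inr (Xk v).
have sigK : forall w, sig w < 2 * N by move=> w; exact: ltn_ord.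
have Wsig_lt : forall w, W * sig w < size s.
  move=> w; apply: leq_trans ssz; rewrite /m ltn_mul2l /= /K; exact: leq_trans (sigK w) _.
have hF : forall u w, e u w -> pos (W * sig w) = F u (widen_ord (leqnSn _) (sig w)).
  move=> u w euw; rewrite /F /g /h /=.
  have -> : (sig w == 2 * N :> nat) = false by apply/negbTE; rewrite neq_ltn sigK.
  have -> : [exists w0, e u w0 && (sig w0 == sig w :> nat)].
    by apply/existsP; exists w; rewrite euw eqxx.
  by rewrite addn0.
have memX : forall u w, (pos (W * sig w) \in X u) = e u w.
  move=> u w; apply/imsetP/idP; last first.
    by move=> euw; exists (widen_ord (leqnSn _) (sig w)) => //; exact: hF.
  case=> r _ /pos_inj E.
  have {}E := E (Wsig_lt w) (leq_trans (g_lt _ _ (ltn_ord r)) ssz).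
  have [rE h0] := divl (ltn0Sn _ : 0 < W) (hW u r) (etrans (addn0 _) E).
  move: (esym h0); rewrite /h -rE.
  have -> : (sig w == 2 * N :> nat) = false by apply/negbTE; rewrite neq_ltn sigK.
  case: ifP => // /existsP[w' /andP[euw' /eqP sw']] _.
  by rewrite -(sig_inj _ _ (val_inj sw')).
have rkX : forall u w, e u w -> rk (X u) (pos (W * sig w)) = sig w.
  by move=> u w euw; rewrite (hF u w euw) (XP u).2.
exists (f @: [set: V]), f; split.
- move=> u v; rewrite /f; case su: (side u); case sv: (side v) => //.
  + case=> /pos_inj E; have {}E := E (Wsig_lt u) (Wsig_lt v).
    have [E1 _] := divl (ltn0Sn _) (ltn0Sn _) (etrans (addn0 _) (etrans E (esym (addn0 _)))).
    exact/sig_inj/val_inj.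
  + case=> EX.
    have : F u ord_max \in X v by rewrite -EX imset_f.
    case/imsetP => r _ /pos_inj E.
    have {}E := E (leq_trans (g_lt _ _ (ltn_ord ord_max)) ssz)
                  (leq_trans (g_lt _ _ (ltn_ord r)) ssz).
    have [rE hE] := divl (hW u _) (hW v _) E.
    move: hE; rewrite /h -rE /= eqxx => -[] /val_inj.
    exact: enum_rank_inj.
- by move=> v; rewrite imset_f.
- by move=> w /imsetP[v _ ->]; exists v.
- move=> u v; rewrite /f; case su: (side u); case sv: (side v) => /=.
  + by apply/negbTE/negP => /Hside; rewrite su sv.
  + by rewrite memX esymm.
  + by rewrite memX.
  + by apply/negbTE/negP => /Hside; rewrite su sv.
- exists col => -[[x KX] /= xK] /imsetP[w _ fw] /imsetP[u _ fu].
  move: fw fu; rewrite /f; case sw: (side w) => // -[xE].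
  case su: (side u) => // -[KE].
  subst x KX.
  rewrite -(cfunE c (exist _ (_, _) xK)) /=.
  have xX : pos (W * sig w) \in X u by exact: xK.
  rewrite Hc //; last by rewrite (XP u).1.
  by rewrite rkX ?sigP // -memX.
Qed.
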